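(* The elements $\alpha^{g,h}_{\chi,\psi}$, for $\chi\in X_N$ (with $\psi=\theta\chi^{-1}$) and $g,h$ relatively prime divisors of $N$, generate $H^\theta$ as an $\mathcal{O}$-module.
   Context: $p$ is an odd prime, $M$ a positive integer with $p\nmid M\varphi(M)$, $N=M$ or $Mp$, $N>1$, $\Delta=(\mathbb{Z}/N\mathbb{Z})^\times/\langle-1\rangle$. $H$ is a space of level $N$ modular symbols: a $\mathbb{Z}_p[\Delta]$-module spanned by symbols $[u:v]$ ($u,v\in\mathbb{Z}/N\mathbb{Z}$ generating the unit ideal) satisfying $[u:v]=[-u:-v]=-[-v:u]$, $[u:v]=[u:u+v]+[u+v:v]$, $\langle a\rangle[u:v]=[au:av]$. $\theta:\Delta\to\mathbb{C}_p^\times$ is a character, $\mathcal{O}=\mathbb{Z}_p[\mu_{\varphi(N)}]$, $X_N=\mathrm{Hom}((\mathbb{Z}/N\mathbb{Z})^\times,\mathcal{O}^\times)$, $e_\theta=\frac1{\varphi(N)}\sum_a\theta^{-1}(a)\langle a\rangle$, $H^\theta=e_\theta(H\otimes_{\mathbb{Z}_p}\mathcal{O})$, and $\alpha^{g,h}_{\chi,\psi}=\frac{1}{\varphi(N)^2}\sum_{a,b\in(\mathbb{Z}/N\mathbb{Z})^\times}\chi^{-1}(a)\psi^{-1}(b)[ga:hb]$. *)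

(* Defs.v *)
From HB Require Import structures.
From mathcomp Require Import all_boot all_order all_algebra all_fingroup.
Set Implicit Arguments. Unset Strict Implicit. Unset Printing Implicit Defensive.
Import Order.TTheory GRing.Theory Num.Theory.
Local Open Scope ring_scope.

Definition unimod (N : nat) (u v : 'Z_N) : Prop :=
  exists x y : 'Z_N, x * u + y * v = 1.

(* a homomorphism (Z/NZ)^x -> O^x  (values are automatically units) *)
Definition is_char (N : nat) (O : comUnitRingType) (chi : {unit 'Z_N} -> O)
  : Prop :=
  chi 1%g = 1 /\ forall a b : {unit 'Z_N}, chi (a * b)%g = chi a * chi b.

Definition in_span (O : comUnitRingType) (V : lmodType O) (P : V -> Prop)
  (x : V) : Prop :=
  exists s : seq (O * V), (forall q, q \in s -> P q.2) /\
                          x = \sum_(q <- s) q.1 *: q.2.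

Definition alpha (N : nat) (O : comUnitRingType) (V : lmodType O)
  (sym : 'Z_N -> 'Z_N -> V) (g h : nat) (chi psi : {unit 'Z_N} -> O) : V :=
  ((totient N)%:R ^- 2) *:
    \sum_(a : {unit 'Z_N}) \sum_(b : {unit 'Z_N})
       ((chi a)^-1 * (psi b)^-1) *: sym (g%:R * val a) (h%:R * val b).

Definition etheta (N : nat) (O : comUnitRingType) (V : lmodType O)
  (act : {unit 'Z_N} -> V -> V) (theta : {unit 'Z_N} -> O) (x : V) : V :=
  ((totient N)%:R ^-1) *: \sum_(a : {unit 'Z_N}) (theta a)^-1 *: act a x.

(* Main.v *)
Require Import Defs.
From HB Require Import structures.
From mathcomp Require Import all_boot all_order all_algebra all_fingroup.
From mathcomp Require Import all_solvable all_field all_character.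
From mathcomp Require Import ring.
Import Order.TTheory GRing.Theory Num.Theory.
Local Open Scope ring_scope.


Lemma prim_transfer (R1 R2 : idomainType) n (w : R1) (z : R2) i j :
  n.-primitive_root w -> n.-primitive_root z -> w ^+ i = w ^+ j -> z ^+ i = z ^+ j.
Proof.
move=> pw pz /eqP; rewrite (eq_prim_root_expr pw) -(eq_prim_root_expr pz).
by move/eqP.
Qed.

Lemma chars_exist (N : nat) (O : idomainType) (z : O) : (1 < N)%N ->
  (totient N).-primitive_root z ->
  exists (I : finType) (chi : I -> {unit 'Z_N} -> O),
   (forall i, is_char (chi i)) /\
   (forall y, \sum_(i : I) chi i y = if y == 1%g then (totient N)%:R else 0).
Proof.
move=> N1 pz.
pose G := units_Zp_group N.
have cardG : #|G| = totient N by apply: card_units_Zp; apply: ltnW.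
have GT x : x \in G by rewrite /= /units_Zp inE.
have abG : abelian G := units_Zp_abelian N.
have lin i : 'chi[G]_i \is a linear_char by apply/char_abelianP.
have n_gt0 : (0 < #|G|)%N := cardG_gt0 G.
have [w pw] := C_prim_root_exists n_gt0.
rewrite -cardG in pz.
have Hx i x : ('chi[G]_i x) ^+ #|G| = 1.
  by rewrite -lin_charX ?GT // expg_cardG ?GT // lin_char1.
pose e i x := sval (prim_rootP pw (Hx i x)).
have eE i x : 'chi_i x = w ^+ e i x by rewrite /e; case: (prim_rootP _ _).
have tr a b : w ^+ a = w ^+ b -> z ^+ a = z ^+ b := @prim_transfer _ _ _ _ _ a b pw pz.
have tr' a b : z ^+ a = z ^+ b -> w ^+ a = w ^+ b := @prim_transfer _ _ _ _ _ a b pz pw.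
exists (Iirr G), (fun i x => z ^+ e i x).
have chiM i a b : z ^+ e i (a * b)%g = z ^+ e i a * z ^+ e i b.
  by rewrite -exprD; apply: tr; rewrite exprD -!eE lin_charM ?GT.
have chi1 i : z ^+ e i 1%g = 1.
  by rewrite -(expr0 z); apply: tr; rewrite -eE expr0 lin_char1.
split.
  by move=> i; split; [apply: chi1 | apply: chiM].
move=> y; case: eqP => [->|ny].
  rewrite (eq_bigr (fun _ => 1)); last by move=> i _; rewrite chi1.
  by rewrite sumr_const card_Iirr_abelian // cardG.
have [i0 Hi0] : exists i0, y \notin cfker 'chi[G]_i0.
  apply/existsP; rewrite -negb_forall; apply/negP => /forallP H; apply: ny.
  have : y \in \bigcap_i cfker 'chi[G]_i by apply/bigcapP=> i _; apply: H.
  by rewrite TI_cfker_irr inE => /eqP.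
have c1 : z ^+ e i0 y != 1.
  apply/negP=> /eqP H; move: Hi0; rewrite cfkerEirr inE eE lin_char1 //.
  by rewrite (tr' _ 0%N) ?eqxx // expr0.
pose m i := cfIirr ('chi[G]_i0 * 'chi_i).
have mE i : 'chi_(m i) = 'chi[G]_i0 * 'chi_i.
  by rewrite cfIirrE // lin_char_irr // rpredM.
have minj : injective m.
  move=> i j /(congr1 (tnth (irr G))); rewrite -!/('chi_(m _)) !mE => H.
  apply: irr_inj; apply/cfunP=> x; have /cfunP/(_ x) := H.
  rewrite !cfunE => /mulfI; apply; exact: lin_char_neq0 (GT _).
have emE i : z ^+ e (m i) y = z ^+ e i0 y * z ^+ e i y.
  by rewrite -exprD; apply: tr; rewrite exprD -!eE mE cfunE.
set S := \sum_i _.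
have : S = z ^+ e i0 y * S.
  transitivity (\sum_i z ^+ e (m i) y); first exact: (reindex_inj minj).
  rewrite /S mulr_sumr; apply: eq_bigr => i _; exact: emE.
move/eqP; rewrite -subr_eq0 -{1}[S]mul1r -mulrBl mulf_eq0 subr_eq0 eq_sym.
by rewrite (negbTE c1) /= => /eqP.
Qed.


Lemma unimod_gh N (g h : nat) (a b : {unit 'Z_N}) : (1 < N)%N -> (g %| N)%N ->
  coprime g h -> unimod (g%:R * val a) (h%:R * val b).
Proof.
move=> N1 gN cop.
have g0 : (0 < g)%N by apply: dvdn_gt0 gN; apply: ltnW.
case: (egcdnP h g0) => kg kh Hdef _.
have va : val (a^-1)%g * val a = 1 by rewrite -FinRing.val_unitM mulVg.
have vb : val (b^-1)%g * val b = 1 by rewrite -FinRing.val_unitM mulVg.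
exists (kg%:R * val (a^-1)%g), (- (kh%:R * val (b^-1)%g)).
have -> : kg%:R * val (a^-1)%g * (g%:R * val a) + - (kh%:R * val (b^-1)%g) * (h%:R * val b)
  = (kg * g)%:R * (val (a^-1)%g * val a) - (kh * h)%:R * (val (b^-1)%g * val b).
  by rewrite !natrM; ring.
by rewrite va vb !mulr1 Hdef (eqP cop) natrD addrAC subrr add0r.
Qed.

Lemma dvd_mod d M n : (d %| M)%N -> (d %| n)%N -> (d %| n %% M)%N.
Proof. by move=> dM dn; rewrite /dvdn (modn_dvdm _ dM). Qed.

Lemma unimod_coprime N (u v : 'Z_N) : (1 < N)%N -> unimod u v ->
  coprime (gcdn u N) (gcdn v N).
Proof.
move=> N1 [x [y H]].
set d := gcdn (gcdn u N) (gcdn v N).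
have du : (d %| u)%N by rewrite /d (dvdn_trans (dvdn_gcdl _ _)) ?dvdn_gcdl.
have dv : (d %| v)%N by rewrite /d (dvdn_trans (dvdn_gcdr _ _)) ?dvdn_gcdl.
have dN : (d %| N)%N by rewrite /d (dvdn_trans (dvdn_gcdl _ _)) ?dvdn_gcdr.
have : (d %| val ((x * u + y * v)%R : 'Z_N))%N.
  have dM : (d %| (Zp_trunc N).+2)%N by rewrite Zp_cast.
  by rewrite /=; apply: dvd_mod => //; apply: dvdn_add; apply: dvd_mod => //;
     apply: dvdn_mull.
by rewrite H /= modn_small // dvdn1.
Qed.


Lemma lift_unit N (u : 'Z_N) : (1 < N)%N ->
  exists a : {unit 'Z_N}, u = (gcdn u N)%:R * val a.
Proof.
move=> N1.
have N0 : (0 < N)%N by apply: ltnW.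
set d := gcdn u N.
have d0 : (0 < d)%N by rewrite gcdn_gt0 N0 orbT.
set u' := (u %/ d)%N; set m := (N %/ d)%N.
have Hu : (u' * d)%N = u by rewrite divnK // dvdn_gcdl.
have HN : (m * d)%N = N by rewrite divnK // dvdn_gcdr.
have cop : gcdn u' m = 1%N.
  apply/eqP; rewrite -(eqn_pmul2r d0) mul1n muln_gcdl Hu HN; apply/eqP.
  by [].
pose pi : nat_pred := [pred q | ~~ (q %| u')%N].
set k := (N`_pi)%N.
set t := (u' + m * k)%N.
have m0 : (0 < m)%N by move: N0; rewrite -HN muln_gt0 => /andP[].
have k0 : (0 < k)%N := part_gt0 _ _.
have t0 : (0 < t)%N by rewrite /t addn_gt0 muln_gt0 m0 k0 orbT.
have ct : coprime N t.
  rewrite coprime_has_primes //; apply/hasPn => q qt; apply/negP => qN.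
  move: qt qN; rewrite !mem_primes => /and3P[pq _ qdt] /and3P[_ _ qdN].
  have qk : (q %| k)%N = ~~ (q %| u')%N.
    apply/idP/idP => [qdk | nqu].
      have : q \in primes k by rewrite mem_primes pq k0 qdk.
      by rewrite primes_part mem_filter => /andP[].
    have : q \in primes k.
      by rewrite primes_part mem_filter mem_primes pq N0 qdN !andbT inE /=.
    by rewrite mem_primes => /and3P[].
  case: (boolP (q %| u')%N) => qu.
    move: qdt; rewrite /t dvdn_addr // Euclid_dvdM // qk qu orbF => qm.
    have : (q %| gcdn u' m)%N by rewrite dvdn_gcd qu qm.
    by rewrite cop dvdn1 => /eqP q1; move: pq; rewrite q1.
  move: qdt; rewrite /t dvdn_addl; first by rewrite (negbTE qu).
  by apply: dvdn_mull; rewrite qk.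
have E : u = (d * t)%:R :> 'Z_N.
  apply: val_inj; rewrite [RHS](val_Zp_nat N1).
  have -> : (d * t = u + k * N)%N.
    by rewrite /t -Hu -HN; ring.
  rewrite addnC modnMDl modn_small //.
  by apply: (leq_trans (ltn_ord u)); rewrite Zp_cast.
exists (FinRing.Unit (etrans (unitZpE t N1) ct)).
by rewrite {1}E natrM.
Qed.


Section Main.
Variables (N : nat) (O : idomainType) (V : lmodType O).
Variable sym : 'Z_N -> 'Z_N -> V.
Variable act : {unit 'Z_N} -> V -> V.
Hypothesis N1 : (1 < N)%N.
Hypothesis Hlin : forall (a : {unit 'Z_N}) (c : O) (x y : V),
            act a (c *: x + y) = c *: act a x + act a y.
Hypothesis Hact : forall (a : {unit 'Z_N}) u v, unimod u v ->
            act a (sym u v) = sym (val a * u) (val a * v).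
Variable theta : {unit 'Z_N} -> O.
Hypothesis Htheta : is_char theta.
Hypothesis HphiO : (totient N)%:R \is a @GRing.unit O.
Local Notation phi := ((totient N)%:R : O).
Local Notation uT := {unit 'Z_N}.

Lemma char_inv (chi : uT -> O) a : is_char chi -> (chi a)^-1 = chi (a^-1)%g.
Proof. by case=> c1 cM; apply: mulr1_eq; rewrite -cM mulgV c1. Qed.

Lemma char_unit (chi : uT -> O) a : is_char chi -> chi a \is a GRing.unit.
Proof. by case=> c1 cM; apply/unitrPr; exists (chi (a^-1)%g); rewrite -cM mulgV c1. Qed.

Lemma char_mulV (chi : uT -> O) a : is_char chi -> chi a * chi (a^-1)%g = 1.
Proof. by case=> c1 cM; rewrite -cM mulgV c1. Qed.

Lemma act0 a : act a 0 = 0.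
Proof.
have := Hlin a 1 0 0; rewrite scale1r !addr0 => /(congr1 (fun v => v - act a 0)).
by rewrite subrr scale1r addrK; move/esym.
Qed.

Lemma actD a x y : act a (x + y) = act a x + act a y.
Proof. by have := Hlin a 1 x y; rewrite !scale1r. Qed.

Lemma actZ a c x : act a (c *: x) = c *: act a x.
Proof. by have := Hlin a c x 0; rewrite !addr0 act0 addr0. Qed.

Lemma act_sum a (I : Type) (r : seq I) (P : pred I) (F : I -> V) :
  act a (\sum_(i <- r | P i) F i) = \sum_(i <- r | P i) act a (F i).
Proof. by apply: big_morph; [exact: actD | exact: act0]. Qed.

Lemma card_uT : #|{: uT}| = totient N.
Proof. by rewrite -cardsT -(card_units_Zp (ltnW N1)). Qed.

Lemma sum_uT_const (x : V) : \sum_(c : uT) x = phi *: x.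
Proof. by rewrite sumr_const card_uT scaler_nat. Qed.

Lemma sum2_shift (F : uT -> uT -> V) c :
  \sum_a \sum_b F a b = \sum_a \sum_b F (c * a)%g (c * b)%g.
Proof.
rewrite (reindex_inj (mulgI c)); apply: eq_bigr => a _.
exact: (reindex_inj (mulgI c)).
Qed.

Lemma fE (chi : uT -> O) x y : is_char chi ->
  (chi x)^-1 * (theta y * (chi y)^-1)^-1 = chi (x^-1)%g * theta (y^-1)%g * chi y.
Proof.
move=> Hc; rewrite invrM; last 2 first.
- by rewrite char_unit.
- by rewrite unitrV char_unit.
rewrite invrK !char_inv //; ring.
Qed.

Definition etheta' x := etheta act theta x.

Lemma etheta_lin c x y : etheta act theta (c *: x + y) =
  c *: etheta act theta x + etheta act theta y.
Proof.
rewrite /etheta.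
under eq_bigr do rewrite Hlin scalerDr scalerA.
rewrite big_split /= scalerDr; congr (_ + _).
rewrite [RHS]scalerA [in RHS]mulrC -[RHS]scalerA [in RHS]scaler_sumr; congr (_ *: _).
by apply: eq_bigr => a _; rewrite scalerA mulrC.
Qed.

Lemma etheta0 : etheta act theta 0 = 0.
Proof.
rewrite /etheta big1 ?scaler0 // => a _; by rewrite act0 scaler0.
Qed.


Lemma act_alpha g h (chi : uT -> O) c : (g %| N)%N -> coprime g h -> is_char chi ->
  act c (alpha sym g h chi (fun b => theta b * (chi b)^-1)) =
  theta c *: alpha sym g h chi (fun b => theta b * (chi b)^-1).
Proof.
move=> gN cop Hc.
have HA (a b : uT) : act c (sym (g%:R * val a) (h%:R * val b)) =
    sym (val c * (g%:R * val a)) (val c * (h%:R * val b)).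
  by apply: Hact; apply: unimod_gh.
have vc : val c * val (c^-1)%g = 1 by rewrite -FinRing.val_unitM mulgV.
rewrite /alpha actZ act_sum.
under eq_bigr => a _ do rewrite act_sum.
under eq_bigr => a _ do under eq_bigr => b _ do rewrite actZ HA.
rewrite [RHS]scalerA [in RHS]mulrC -[RHS]scalerA; congr (_ *: _).
rewrite (sum2_shift _ (c^-1)%g) [RHS]scaler_sumr; apply: eq_bigr => a _.
rewrite scaler_sumr; apply: eq_bigr => b _.
rewrite scalerA !fE //.
have hc := @char_mulV chi c Hc.
case: (Hc) => c1 cM; case: (Htheta) => t1 tM.
congr (_ *: sym _ _).
- rewrite !invMg !invgK !cM !tM.
  transitivity ((theta c * (chi a^-1%g * theta b^-1%g * chi b)) * (chi c * chi (c^-1)%g)).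
    by ring.
  by rewrite hc mulr1.
- rewrite FinRing.val_unitM.
  transitivity (g%:R * val a * (val c * val (c^-1)%g)); first by ring.
  by rewrite vc mulr1.
- rewrite FinRing.val_unitM.
  transitivity (h%:R * val b * (val c * val (c^-1)%g)); first by ring.
  by rewrite vc mulr1.
Qed.

Lemma etheta_alpha g h (chi : uT -> O) : (g %| N)%N -> coprime g h -> is_char chi ->
  etheta act theta (alpha sym g h chi (fun b => theta b * (chi b)^-1)) =
  alpha sym g h chi (fun b => theta b * (chi b)^-1).
Proof.
move=> gN cop Hc; rewrite /etheta.
under eq_bigr => c _ do rewrite act_alpha // scalerA mulVr ?char_unit // scale1r.
by rewrite sum_uT_const scalerA mulVr // scale1r.
Qed.

Lemma sum3 (I : finType) (k : I -> O) (F : I -> uT -> uT -> O) (s : uT -> uT -> V) :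
  \sum_i k i *: (\sum_a \sum_b F i a b *: s a b) =
  \sum_b \sum_a (\sum_i k i * F i a b) *: s a b.
Proof.
transitivity (\sum_i \sum_a \sum_b (k i * F i a b) *: s a b).
  apply: eq_bigr => i _; rewrite scaler_sumr; apply: eq_bigr => a _.
  rewrite scaler_sumr; apply: eq_bigr => b _; by rewrite scalerA.
rewrite exchange_big; under eq_bigr => a _ do rewrite exchange_big.
rewrite exchange_big; apply: eq_bigr => b _; apply: eq_bigr => a _.
by rewrite scaler_suml.
Qed.

Lemma pick_sum (x : uT) (G : uT -> V) (C : O) :
  \sum_a (if (x * a^-1)%g == 1%g then C else 0) *: G a = C *: G x.
Proof.
rewrite (bigD1 x) //= mulgV eqxx big1 ?addr0 // => a nax.
by rewrite -eq_mulgV1 eq_sym (negbTE nax) scale0r.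
Qed.

Lemma etheta_sym g h a0 b0 (I : finType) (chi : I -> uT -> O) :
  (g %| N)%N -> coprime g h -> (forall i, is_char (chi i)) ->
  (forall y, \sum_i chi i y = if y == 1%g then phi else 0) ->
  etheta act theta (sym (g%:R * val a0) (h%:R * val b0)) =
  \sum_i (theta b0 * chi i a0 * chi i (b0^-1)%g) *:
      alpha sym g h (chi i) (fun b => theta b * (chi i b)^-1).
Proof.
move=> gN cop Hc orth.
case: (Htheta) => t1 tM.
rewrite /alpha.
under [RHS]eq_bigr => i _ do rewrite scalerA mulrC -scalerA.
rewrite -scaler_sumr sum3.
have E2 (a b : uT) : \sum_i theta b0 * chi i a0 * chi i (b0^-1)%g *
       ((chi i a)^-1 * (theta b * (chi i b)^-1)^-1)
    = theta b0 * theta (b^-1)%g * (if (a0 * b0^-1 * b * a^-1)%g == 1%g then phi else 0).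
  rewrite -orth mulr_sumr; apply: eq_bigr => i _.
  rewrite fE //; case: (Hc i) => c1 cM; rewrite !cM; ring.
under eq_bigr => b _ do under eq_bigr => a _ do rewrite E2 -scalerA.
under eq_bigr => b _ do rewrite -scaler_sumr pick_sum scalerA.
rewrite (reindex_inj (mulIg b0)) /=.
under eq_bigr => c _ do rewrite mulrC -scalerA.
rewrite -scaler_sumr scalerA -exprVn expr2 -mulrA mulVr // mulr1.
rewrite /etheta; congr (_ *: _); apply: eq_bigr => c _.
have vb : val (b0^-1)%g * val b0 = 1 by rewrite -FinRing.val_unitM mulVg.
rewrite Hact; last by apply: unimod_gh.
congr (_ *: sym _ _).
- rewrite invMg tM mulrA char_mulV // mul1r char_inv //.
- transitivity (val c * (g%:R * val a0) * (val (b0^-1)%g * val b0)).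
    by rewrite vb mulr1.
  by rewrite /=; ring.
- by rewrite /=; ring.
Qed.

End Main.

Lemma span0 (O : comUnitRingType) (V : lmodType O) (P : V -> Prop) : in_span P 0.
Proof. by exists [::]; split => //; rewrite big_nil. Qed.

Lemma span1 (O : comUnitRingType) (V : lmodType O) (P : V -> Prop) x : P x -> in_span P x.
Proof.
move=> Px; exists [:: (1, x)]; split; first by move=> q; rewrite inE => /eqP ->.
by rewrite big_cons big_nil addr0 scale1r.
Qed.

Lemma spanD (O : comUnitRingType) (V : lmodType O) (P : V -> Prop) c x y :
  in_span P x -> in_span P y -> in_span P (c *: x + y).
Proof.
move=> [s1 [H1 ->]] [s2 [H2 ->]].
exists ([seq (c * q.1, q.2) | q <- s1] ++ s2); split.
  move=> q; rewrite mem_cat => /orP[/mapP[q' q'in ->] /= | ]; first exact: H1.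
  exact: H2.
rewrite big_cat big_map /= scaler_sumr; congr (_ + _).
by apply: eq_bigr => q _; rewrite scalerA.
Qed.

Lemma span_sum (O : comUnitRingType) (V : lmodType O) (P : V -> Prop)
  (I : finType) (k : I -> O) (F : I -> V) :
  (forall i, in_span P (F i)) -> in_span P (\sum_i k i *: F i).
Proof.
move=> HF; apply: (big_rec (in_span P)); first exact: span0.
by move=> i x _ Hx; apply: spanD.
Qed.

Theorem corollary2p11
  (p M N : nat)
  (Hp : prime p) (Hpodd : odd p) (HM : (0 < M)%N)
  (HpM : ~~ (p %| M * totient M)%N)
  (HN : N = M \/ N = (M * p)%N) (HN1 : (1 < N)%N)
  (O : idomainType)
  (HphiO : (totient N)%:R \is a @GRing.unit O)
  (HmuO : exists z : O, (totient N).-primitive_root z)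
  (V : lmodType O)
  (sym : 'Z_N -> 'Z_N -> V)
  (act : {unit 'Z_N} -> V -> V)
  (Hspan : forall x : V, in_span (fun y => exists u v, unimod u v /\ y = sym u v) x)
  (Hneg : forall u v, unimod u v -> sym u v = sym (- u) (- v))
  (Hrot : forall u v, unimod u v -> sym u v = - sym (- v) u)
  (Hman : forall u v, unimod u v -> sym u v = sym u (u + v) + sym (u + v) v)
  (Hlin : forall (a : {unit 'Z_N}) (c : O) (x y : V),
            act a (c *: x + y) = c *: act a x + act a y)
  (Hact : forall (a : {unit 'Z_N}) u v, unimod u v ->
            act a (sym u v) = sym (val a * u) (val a * v))
  (theta : {unit 'Z_N} -> O)
  (Htheta : is_char theta)
  (Htheta_even : forall a : {unit 'Z_N}, val a = -1 -> theta a = 1) :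
  forall x : V,
    (exists y : V, x = etheta act theta y) <->
    in_span (fun z => exists (chi : {unit 'Z_N} -> O) (g h : nat),
               [/\ is_char chi, (g %| N)%N, (h %| N)%N, coprime g h &
                   z = alpha sym g h chi (fun b => theta b * (chi b)^-1)]) x.
Proof.
move=> x; split.
- case=> y ->; have [s [Hs ->]] := Hspan y.
  have [z pz] := HmuO.
  have [I [chi [Hc orth]]] := @chars_exist N O z HN1 pz.
  elim: s Hs => [|q s IH] Hs.
    by rewrite big_nil (@etheta0 N O V act Hlin theta); apply: span0.
  rewrite big_cons (@etheta_lin N O V act Hlin theta); apply: spanD; last first.
    by apply: IH => q' q'in; apply: Hs; rewrite inE q'in orbT.
  have [u [v [uv ->]]] := Hs q (mem_head _ _).
  have cop := @unimod_coprime N u v HN1 uv.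
  have [a0 ea] := @lift_unit N u HN1; have [b0 eb] := @lift_unit N v HN1.
  rewrite {1}ea {1}eb.
  rewrite (@etheta_sym N O V sym act HN1 Hact theta Htheta HphiO _ _ a0 b0 I chi (dvdn_gcdr _ _) cop Hc orth).
  apply: span_sum => i; apply: span1.
  exists (chi i), (gcdn u N), (gcdn v N); split => //; [exact: dvdn_gcdr | exact: dvdn_gcdr].
- case=> s [Hs ->]; exists (\sum_(q <- s) q.1 *: q.2).
  elim: s Hs => [|q s IH] Hs; first by rewrite big_nil (@etheta0 N O V act Hlin theta).
  rewrite big_cons (@etheta_lin N O V act Hlin theta) -IH; last first.
    by move=> q' q'in; apply: Hs; rewrite inE q'in orbT.
  have [chi [g [h [Hc gN hN cop ->]]]] := Hs q (mem_head _ _).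
  by rewrite (@etheta_alpha N O V sym act HN1 Hlin Hact theta Htheta HphiO g h chi gN cop Hc).
Qed.
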